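(* For all $n\ge2$, viewing $\Delta^{n-1}$ as a facet of $\Delta^n$ (so $\Delta^n=v*\Delta^{n-1}$), the inclusion $\mathcal{M}(\Delta^{n-1})\hookrightarrow\mathcal{M}(\Delta^n)$ sending each pair to itself is null-homotopic, the long exact sequence in reduced homology of the pair $(\mathcal{M}(\Delta^n),\mathcal{M}(\Delta^{n-1}))$ splits into short exact sequences, and $$\tilde H_k(\mathcal{M}(\Delta^n),\mathcal{M}(\Delta^{n-1}))\cong\tilde H_k(\mathcal{M}(\Delta^n))\oplus\tilde H_{k-1}(\mathcal{M}(\Delta^{n-1}))$$ for all $k$.
   Context: All simplicial complexes are finite abstract simplicial complexes; simplices are nonempty. $\Delta^n$ is the simplicial complex of all nonempty subsets of an $(n+1)$-element vertex set. The Hasse diagram $\mathcal{H}(K)$ of $K$ is the directed graph whose vertices are the simplices of $K$, with an edge $\sigma\to\tau$ whenever $\sigma\subsetneq\tau$ and $\dim\tau=\dim\sigma+1$. A matching on $\mathcal{H}(K)$ is a set $W$ of edges of $\mathcal{H}(K)$, no two sharing a vertex; an edge in $W$ is called a pair. $W$ is acyclic if the directed graph obtained from $\mathcal{H}(K)$ by reversing every edge in $W$ has no directed cycle. The complex of discrete Morse matchings $\mathcal{M}(K)$ is the simplicial complex whose vertices are the edges of $\mathcal{H}(K)$ and whose simplices are the nonempty acyclic matchings on $\mathcal{H}(K)$. *)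

(* Defs.v *)
From HB Require Import structures.
From mathcomp Require Import all_boot all_order all_algebra.
From mathcomp Require Import all_classical all_reals all_analysis.

Set Implicit Arguments.
Unset Strict Implicit.
Unset Printing Implicit Defensive.

Import Order.TTheory GRing.Theory Num.Theory.
Import numFieldNormedType.Exports.
Local Open Scope ring_scope.

(* Simplicial complexes on a finite vertex type V are given by their   *)
(* set of (nonempty) simplices K : {set {set V}}.                      *)

Definition Delta (n : nat) : {set {set 'I_n.+1}} :=
  [set s : {set 'I_n.+1} | s != finset.set0].

(* The facet of Delta^n opposite to the vertex v = ord_max; this is     *)
(* Delta^(n-1), so that Delta^n = v * Delta^(n-1).                      *)
Definition Facet (n : nat) : {set {set 'I_n.+1}} :=
  [set s : {set 'I_n.+1} | (s != finset.set0) && (ord_max \notin s)].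

(* Edges of the Hasse diagram H(K): sigma -> tau, sigma < tau, dim+1. *)
Definition hedge (V : finType) (K : {set {set V}}) (e : {set V} * {set V}) : bool :=
  [&& e.1 \in K, e.2 \in K, e.1 \subset e.2 & #|e.2| == #|e.1|.+1].

Definition hedges (V : finType) (K : {set {set V}}) : {set {set V} * {set V}} :=
  [set e | hedge K e].

Definition is_matching (V : finType) (W : {set {set V} * {set V}}) : bool :=
  [forall e in W, forall f in W,
     (e != f) ==> [&& e.1 != f.1, e.1 != f.2, e.2 != f.1 & e.2 != f.2]].

Definition mrel (V : finType) (K : {set {set V}}) (W : {set {set V} * {set V}})
  : rel {set V} :=
  fun x y => (hedge K (x, y) && ((x, y) \notin W)) || ((y, x) \in W).

Definition acyclic (V : finType) (K : {set {set V}}) (W : {set {set V} * {set V}})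
  : bool :=
  ~~ [exists x, exists y, mrel K W x y && connect (mrel K W) y x].

(* The complex of discrete Morse matchings M(K): vertices are edges of  *)
(* H(K), simplices are the nonempty acyclic matchings.                  *)
Definition MM (V : finType) (K : {set {set V}}) : {set {set ({set V} * {set V})}} :=
  [set W | [&& W != finset.set0, W \subset hedges K, is_matching W & acyclic K W]].

(* Reduced (augmented) simplicial chains with integer coefficients.    *)
(* A k-chain of L is a function on sets of vertices supported on the   *)
(* simplices of L with k+1 vertices (the empty simplex in degree -1).  *)
(* Orientation: vertices are ordered by enum_rank.                     *)

Definition cochainT (U : finType) := {ffun {set U} -> int}.

Definition chain (U : finType) (L : {set {set U}}) (k : int) (c : {ffun {set U} -> int})
  : Prop :=
  forall s, c s != 0 -> s \in finset.set0 |: L /\ (#|s|%:Z = k + 1).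

(* Boundary: d[v_0..v_k] = sum_i (-1)^i [v_0..^v_i..v_k] (augmented). *)
Definition bd (U : finType) (c : {ffun {set U} -> int}) : {ffun {set U} -> int} :=
  [ffun t : {set U} => \sum_(u | u \notin t)
      (-1) ^+ #|[set x in t | (enum_rank x < enum_rank u)%N]| * c (u |: t)].

Definition cycles (U : finType) (L : {set {set U}}) (k : int) (c : {ffun {set U} -> int})
  : Prop := chain L k c /\ bd c = 0.

Definition bnd (U : finType) (L : {set {set U}}) (k : int) (c : {ffun {set U} -> int})
  : Prop := exists d, chain L (k + 1) d /\ c = bd d.

(* H_k(X,A) = relcyc / relbnd, as subquotient of the chains of X.        *)
Definition relcyc (U : finType) (X A : {set {set U}}) (k : int)
  (c : {ffun {set U} -> int}) : Prop :=
  chain X k c /\ chain A (k - 1) (bd c).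

Definition relbnd (U : finType) (X A : {set {set U}}) (k : int)
  (c : {ffun {set U} -> int}) : Prop :=
  exists d e, [/\ chain X (k + 1) d, chain A k e & c = bd d + e].

(* Isomorphism of subquotient groups Z1/B1 ~= Z2/B2 (B_i <= Z_i        *)
(* subgroups of abelian groups G_i), given by an additive map on Z1     *)
(* inducing a well-defined bijection of the quotients.                  *)
Definition sq_iso (G1 G2 : zmodType) (Z1 B1 : G1 -> Prop) (Z2 B2 : G2 -> Prop)
  : Prop :=
  exists f : G1 -> G2,
    [/\ forall x y, Z1 x -> Z1 y -> f (x - y) = f x - f y,
        forall x, Z1 x -> Z2 (f x),
        forall x, B1 x -> B2 (f x),
        forall x, Z1 x -> B2 (f x) -> B1 x &
        forall y, Z2 y -> exists2 x, Z1 x & B2 (y - f x)].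

(* The long exact sequence of reduced homology of (X, A) splits at degree *)
(* k into  0 -> H~_k(X) -j*-> H_k(X,A) -d-> H~_(k-1)(A) -> 0  (exact).   *)
Definition les_splits_at (U : finType) (X A : {set {set U}}) (k : int) : Prop :=
  [/\ (* j_* injective *)
      forall c, cycles X k c -> relbnd X A k c -> bnd X k c,
      (* exact at H_k(X,A): ker d = im j_* *)
      forall c, relcyc X A k c -> bnd A (k - 1) (bd c) ->
        exists2 c', cycles X k c' & relbnd X A k (c - c') &
      (* d surjective *)
      forall z, cycles A (k - 1) z ->
        exists2 c, relcyc X A k c & bnd A (k - 1) (z - bd c)].

(* Geometric realization |L| inside the standard simplex of R^U,       *)
(* coordinates indexed by enum_rank.                                    *)
Definition realization (R : realType) (U : finType) (L : {set {set U}})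
  : set 'rV[R]_#|U| :=
  fun p => [/\ forall i, 0 <= p ord0 i, \sum_i p ord0 i = 1 &
              [set u | p ord0 (enum_rank u) != 0] \in L].

Arguments realization R {U} L.

Definition incl_nullhomotopic (R : realType) (U : finType) (A X : {set {set U}})
  : Prop :=
  exists (H : R * 'rV[R]_#|U| -> 'rV[R]_#|U|) (c : 'rV[R]_#|U|),
    [/\ {within `[0, 1] `*` realization R A, continuous H}%classic,
        forall t x, (`[0, 1]%classic : set R) t -> realization R A x -> realization R X (H (t, x)),
        forall x, realization R A x -> H (0, x) = x &
        forall x, realization R A x -> H (1, x) = c].

(* Main.v *)
Require Import Defs.
From HB Require Import structures.
From mathcomp Require Import all_boot all_order all_algebra.
From mathcomp Require Import all_classical all_reals all_analysis.
From mathcomp Require Import zify ring.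
Set Implicit Arguments.
Unset Strict Implicit.
Unset Printing Implicit Defensive.
Import Order.TTheory GRing.Theory Num.Theory.
Import numFieldNormedType.Exports.
Local Open Scope ring_scope.
Definition cnt (U : finType) (t : {set U}) (u : U) : nat :=
  #|[set x in t | (enum_rank x < enum_rank u)%N]|.

Lemma bdE (U : finType) (c : {ffun {set U} -> int}) t :
  bd c t = \sum_(u | u \notin t) (-1) ^+ cnt t u * c (u |: t).
Proof. by rewrite /bd ffunE. Qed.

Lemma cntU1 (U : finType) (t : {set U}) (x u : U) : x \notin t ->
  cnt (x |: t) u = ((enum_rank x < enum_rank u)%N + cnt t u)%N.
Proof.
move=> xt; rewrite /cnt.
have -> : [set y in x |: t | (enum_rank y < enum_rank u)%N] =
   (if (enum_rank x < enum_rank u)%N then x |: [set y in t | (enum_rank y < enum_rank u)%N]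
    else [set y in t | (enum_rank y < enum_rank u)%N]).
  case h: (enum_rank x < enum_rank u)%N; apply/setP => y; rewrite !inE;
  case: (eqVneq y x) => [->|] /=; rewrite ?h ?(negbTE xt) //.
case: ifP => _ //; rewrite cardsU1 inE (negbTE xt) //.
Qed.

Lemma cntD1 (U : finType) (t : {set U}) (x u : U) : x \in t ->
  cnt t u = ((enum_rank x < enum_rank u)%N + cnt (t :\ x) u)%N.
Proof.
move=> xt; rewrite -cntU1 ?setD11 // finset.setD1K //.
Qed.

Lemma signD (a b : nat) : (-1) ^+ (a + b) = (-1) ^+ a * (-1) ^+ b :> int.
Proof. by rewrite exprD. Qed.

Lemma rk_lt (U : finType) (u w : U) : u != w ->
  ((enum_rank u < enum_rank w)%N + (enum_rank w < enum_rank u)%N = 1)%N.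
Proof.
move=> uw; have : enum_rank u != enum_rank w by rewrite (inj_eq enum_rank_inj).
move=> /eqP h. have h' : (nat_of_ord (enum_rank u) <> nat_of_ord (enum_rank w)).
  by move=> e; apply: h; apply: val_inj.
case: ltngtP; lia.
Qed.

Lemma bdB (U : finType) (c d : {ffun {set U} -> int}) : bd (c - d) = bd c - bd d.
Proof.
apply/ffunP => t; rewrite !ffunE -sumrB; apply: eq_bigr => u _.
by rewrite !ffunE mulrBr.
Qed.

Lemma bdD (U : finType) (c d : {ffun {set U} -> int}) : bd (c + d) = bd c + bd d.
Proof.
apply/ffunP => t; rewrite !ffunE -big_split; apply: eq_bigr => u _.
by rewrite !ffunE mulrDr.
Qed.

Lemma bd0 (U : finType) : bd (0 : {ffun {set U} -> int}) = 0.
Proof. by apply/ffunP => t; rewrite !ffunE big1 // => u _; rewrite ffunE mulr0. Qed.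

Lemma bdbd (U : finType) (c : {ffun {set U} -> int}) : bd (bd c) = 0.
Proof.
apply/ffunP => t; rewrite bdE [RHS]ffunE.
pose F (u w : U) : int := if (u \notin t) && (w \notin t) && (w != u) then
  (-1) ^+ (cnt t u + cnt t w + (enum_rank u < enum_rank w)%N) * c (w |: (u |: t)) else 0.
have E : \sum_(u | u \notin t) (-1) ^+ cnt t u * bd c (u |: t) = \sum_u \sum_w F u w.
  rewrite big_mkcond; apply: eq_bigr => u _; case: ifP => ut.
    rewrite bdE mulr_sumr big_mkcond; apply: eq_bigr => w _.
    rewrite /F ut /= in_setU1 negb_or; case: (w \notin t) => /=; last by rewrite andbF.
    rewrite eq_sym; case: eqP => //= _.
    by rewrite cntU1 // mulrA -!exprD addnA addnAC.
  by rewrite big1 // => w _; rewrite /F ut.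
have A : forall u w, F w u = - F u w.
  move=> u w; case: (eqVneq u w) => [->|uw]; first by rewrite /F eqxx andbF oppr0.
  rewrite /F uw eq_sym uw !andbT.
  case: (u \notin t); case: (w \notin t) => /=; rewrite ?oppr0 //.
  rewrite finset.setUCA -mulNr; congr (_ * _).
  have := rk_lt uw; rewrite !exprD => h.
  have -> : (enum_rank w < enum_rank u)%N = ~~ (enum_rank u < enum_rank w)%N.
    by move: h; case: (_ < _)%N; case: (_ < _)%N.
  by case: (_ < _)%N => /=; rewrite ?expr1 ?expr0 mulrC; lia.
rewrite E; set S := \sum_u _.
have : S = - S.
  rewrite {1}/S exchange_big /= /S -sumrN; apply: eq_bigr => w _.
  rewrite -sumrN; apply: eq_bigr => u _; exact: A.
move=> h; lia.
Qed.

Definition cone (U : finType) (a : U) (c : {ffun {set U} -> int}) : {ffun {set U} -> int} :=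
  [ffun s : {set U} => if a \in s then (-1) ^+ cnt (s :\ a) a * c (s :\ a) else 0].

Lemma coneB (U : finType) (a : U) c d : cone a (c - d) = cone a c - cone a d.
Proof. by apply/ffunP => s; rewrite !ffunE; case: ifP; rewrite ?subr0 // ?ffunE mulrBr. Qed.

Lemma coneD (U : finType) (a : U) c d : cone a (c + d) = cone a c + cone a d.
Proof. by apply/ffunP => s; rewrite !ffunE; case: ifP; rewrite ?addr0 // ?ffunE mulrDr. Qed.

Lemma cone0 (U : finType) (a : U) : cone a 0 = 0.
Proof. by apply/ffunP => s; rewrite !ffunE; case: ifP; rewrite // ?ffunE mulr0. Qed.

Lemma sign2 (m : nat) : (-1) ^+ m * (-1) ^+ m = 1 :> int.
Proof. by rewrite -exprD addnn -mul2n exprM sqrrN expr1n. Qed.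

Lemma bd_cone (U : finType) (a : U) (c : {ffun {set U} -> int}) :
  (forall s : {set U}, a \in s -> c s = 0) -> bd (cone a c) = c - cone a (bd c).
Proof.
move=> ca; apply/ffunP => t; rewrite bdE [RHS]ffunE [X in _ = _ + X]ffunE [cone a (bd c) t]ffunE.
case: (boolP (a \in t)) => ha.
  rewrite ca // sub0r bdE mulr_sumr -sumrN.
  rewrite [RHS](bigD1 a) /=; last by rewrite setD11.
  rewrite finset.setD1K // ca // mulr0 mulr0 oppr0 add0r.
  apply: eq_big => [u|u ut].
    rewrite in_setD1 negb_and negbK; case: (eqVneq u a) => [->|] /=; by rewrite ?ha ?andbT.
  have ua : u != a by apply: contraNneq ut => ->.
  have ut' : u \notin t :\ a by rewrite in_setD1 negb_and ut orbT.
  rewrite ffunE in_setU1 ha orbT.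
  have -> : (u |: t) :\ a = u |: (t :\ a).
    apply/setP => x; rewrite !inE; case: (eqVneq x a) => [->|] //=.
    by rewrite eq_sym (negbTE ua).
  rewrite (cntD1 u ha) cntU1 // mulrA -mulNr mulrA; congr (_ * _).
  have := rk_lt ua; rewrite !exprD => h.
  have -> : (enum_rank a < enum_rank u)%N = ~~ (enum_rank u < enum_rank a)%N.
    by move: h; case: (_ < _)%N; case: (_ < _)%N.
  by case: (_ < _)%N => /=; rewrite ?expr1 ?expr0; lia.
rewrite subr0 (bigD1 a) //= big1 ?addr0.
  by rewrite ffunE setU11 setU1K // mulrA sign2 mul1r.
move=> u /andP [ut ua]; rewrite ffunE in_setU1 eq_sym (negbTE ua) (negbTE ha) /=.
by rewrite mulr0.
Qed.

Lemma chain0 (U : finType) (L : {set {set U}}) k : chain L k 0.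
Proof. by move=> s; rewrite ffunE eqxx. Qed.

Lemma chainB (U : finType) (L : {set {set U}}) k c d :
  chain L k c -> chain L k d -> chain L k (c - d).
Proof.
move=> hc hd s; rewrite !ffunE; case: (eqVneq (c s) 0) => [->|/hc //].
by rewrite sub0r oppr_eq0 => /hd.
Qed.

Lemma chainD (U : finType) (L : {set {set U}}) k c d :
  chain L k c -> chain L k d -> chain L k (c + d).
Proof.
move=> hc hd s; rewrite !ffunE; case: (eqVneq (c s) 0) => [->|/hc //].
by rewrite add0r => /hd.
Qed.

Lemma chain_sub (U : finType) (A X : {set {set U}}) k c :
  {subset A <= X} -> chain A k c -> chain X k c.
Proof.
move=> AX hc s /hc [h1 h2]; split=> //; move: h1; rewrite !in_setU1.
by case/orP => [->//|/AX ->]; rewrite orbT.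
Qed.

Lemma chain_deg (U : finType) (L : {set {set U}}) k k' c :
  k = k' -> chain L k c -> chain L k' c.
Proof. by move=> ->. Qed.

Lemma chain_van (U : finType) (A : {set {set U}}) (a : U) k c :
  (forall s, s \in finset.set0 |: A -> a \notin s) -> chain A k c ->
  forall s : {set U}, a \in s -> c s = 0.
Proof.
move=> hA hc s as1; apply/eqP; apply: contraTT as1 => /hc [h _]; exact: hA.
Qed.

Lemma chain_cone (U : finType) (A X : {set {set U}}) (a : U) k c :
  (forall s, s \in finset.set0 |: A -> a |: s \in X) -> chain A k c ->
  chain X (k + 1) (cone a c).
Proof.
move=> hA hc s; rewrite ffunE; case: ifP => [as1|]; last by rewrite eqxx.
rewrite mulf_eq0 negb_or => /andP [_ /hc [h1 h2]]; split.
  by rewrite in_setU1 -(finset.setD1K as1) hA ?orbT.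
rewrite (cardsD1 a s) as1 /= in h2 *; lia.
Qed.

Lemma bd_cone_chain (U : finType) (A : {set {set U}}) (a : U) k c :
  (forall s, s \in finset.set0 |: A -> a \notin s) -> chain A k c ->
  bd (cone a c) = c - cone a (bd c).
Proof. by move=> hv hc; apply: bd_cone; apply: chain_van hv hc. Qed.

Lemma les_gen (U : finType) (X A : {set {set U}}) (a : U) k :
  {subset A <= X} ->
  (forall s, s \in finset.set0 |: A -> a |: s \in X) ->
  (forall s, s \in finset.set0 |: A -> a \notin s) ->
  les_splits_at X A k.
Proof.
move=> hAX hc hv; split.
- move=> c [cX bc] [d [e [dX eA ce]]].
  have be : bd e = 0 by move: bc; rewrite ce bdD bdbd add0r.
  rewrite ce.
  exists (d + cone a e); split; first by apply: chainD => //; exact: chain_cone eA.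
  by rewrite bdD (bd_cone_chain hv eA) be cone0 subr0.
- move=> c [cX bA] [d [dA bcd]].
  have dA' : chain A k d by apply: chain_deg dA; lia.
  exists (c - d).
    split; first by apply: chainB => //; exact: chain_sub dA'.
    by rewrite bdB bcd subrr.
  exists 0, d; split => //; first exact: chain0.
  by rewrite bd0 add0r opprB addrC subrK.
- move=> z [zA bz]; exists (cone a z).
    split; first by apply: chain_deg (chain_cone hc zA); lia.
    by rewrite (bd_cone_chain hv zA) bz cone0 subr0.
  exists 0; split; first exact: chain0.
  by rewrite (bd_cone_chain hv zA) bz cone0 subr0 subrr bd0.
Qed.

Lemma swap4 (G : zmodType) (x y u v : G) : x - y - (u - v) = x - u - (y - v).
Proof. by rewrite !opprB !addrA [x - y + v]addrAC [x + v - y - u]addrAC [x + v - u]addrAC. Qed.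

Lemma bnd0 (U : finType) (L : {set {set U}}) k : bnd L k 0.
Proof. by exists 0; split; [exact: chain0 | rewrite bd0]. Qed.

Lemma sq_gen (U : finType) (X A : {set {set U}}) (a : U) k :
  {subset A <= X} ->
  (forall s, s \in finset.set0 |: A -> a |: s \in X) ->
  (forall s, s \in finset.set0 |: A -> a \notin s) ->
  sq_iso (G1 := {ffun {set U} -> int})
         (G2 := ({ffun {set U} -> int} * {ffun {set U} -> int})%type)
         (relcyc X A k) (relbnd X A k)
         (fun p => cycles X k p.1 /\ cycles A (k - 1) p.2)
         (fun p => bnd X k p.1 /\ bnd A (k - 1) p.2).
Proof.
move=> hAX hc hv.
exists (fun c => (c - cone a (bd c), bd c)); split.
- move=> x y _ _; rewrite bdB coneB.
  apply: injective_projections => /=; last by [].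
  exact: swap4.
- move=> c [cX bA]; split; split => //=.
  + apply: chainB => //; apply: chain_deg (chain_cone hc bA); lia.
  + by rewrite bdB (bd_cone_chain hv bA) bdbd cone0 subr0 subrr.
  + by rewrite bdbd.
- move=> c [d [e [dX eA ce]]]; split => /=.
    exists (d + cone a e); split; first by apply: chainD => //; exact: chain_cone eA.
    by rewrite ce bdD bdbd add0r bdD (bd_cone_chain hv eA) addrA.
  exists e; split; first by apply: chain_deg eA; lia.
  by rewrite ce bdD bdbd add0r.
- move=> c [cX bA] [[d [dX h1]] [e [eA h2]]] /=.
  have eA' : chain A k e by apply: chain_deg eA; lia.
  exists (d - cone a e), e; split => //.
    by apply: chainB => //; exact: chain_cone eA'.
  simpl in h1, h2.
  by rewrite bdB (bd_cone_chain hv eA') -h2 -h1 opprB addrA !subrK.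
- move=> [p1 z] [[aX ba] [zA bz]] /=; exists (p1 + cone a z).
    split; first by apply: chainD => //; apply: chain_deg (chain_cone hc zA); lia.
    by rewrite bdD ba add0r (bd_cone_chain hv zA) bz cone0 subr0.
  have -> : bd (p1 + cone a z) = z.
    by rewrite bdD ba add0r (bd_cone_chain hv zA) bz cone0 subr0.
  rewrite addrK; split; rewrite /= subrr; exact: bnd0.
Qed.
Local Close Scope ring_scope.

Lemma connect_pres (T : finType) (e : rel T) (P : pred T) :
  (forall a b, e a b -> P a -> P b) -> forall x y, connect e x y -> P x -> P y.
Proof.
move=> h x y /connectP [p pth ->]; elim: p x pth => //= z p IH x /andP [exz pz] Px.
exact: IH pz (h _ _ exz Px).
Qed.

Lemma connect_pot (T : finType) (e : rel T) (P : pred T) (phi : T -> nat) :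
  (forall a b, e a b -> P a -> P b) -> (forall a b, e a b -> P a -> phi a < phi b) ->
  forall x y, connect e x y -> P x -> phi x <= phi y.
Proof.
move=> h hp x y /connectP [p pth ->]; elim: p x pth => //= z p IH x /andP [exz pz] Px.
exact: leq_trans (ltnW (hp _ _ exz Px)) (IH _ pz (h _ _ exz Px)).
Qed.

Lemma connect_restr (T : finType) (e e' : rel T) (P : pred T) :
  (forall a b, e a b -> P a -> P b) -> (forall a b, e a b -> ~~ P b -> e' a b) ->
  forall x y, connect e x y -> ~~ P y -> connect e' x y.
Proof.
move=> h h' x y /connectP [p pth ->]; elim: p x pth => //= z p IH x /andP [exz pz] Py.
apply: connect_trans (IH _ pz Py); apply: connect1; apply: (h' _ _ exz).
apply: contra Py => Pz; apply: (connect_pres h _ Pz); apply/connectP; by exists p.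
Qed.

Definition apex (n : nat) : {set 'I_n.+1} * {set 'I_n.+1} :=
  ([set ord_max], [set ord_max; ord0]).

Lemma max0 (n : nat) : (0 < n)%N -> (ord_max : 'I_n.+1) != ord0.
Proof. by move=> hn; apply/eqP => /(congr1 val) /= h; move: hn; rewrite h. Qed.

Lemma inD (n : nat) (s : {set 'I_n.+1}) : (s \in Delta n) = (s != finset.set0).
Proof. by rewrite inE. Qed.

Lemma inF (n : nat) (s : {set 'I_n.+1}) :
  (s \in Facet n) = (s != finset.set0) && (ord_max \notin s).
Proof. by rewrite inE. Qed.

Lemma hedgeF (n : nat) (e : {set 'I_n.+1} * {set 'I_n.+1}) : hedge (Facet n) e ->
  [/\ hedge (Delta n) e, ord_max \notin e.1 & ord_max \notin e.2].
Proof.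
case/and4P; rewrite !inF => /andP [h1 h2] /andP [h3 h4] h5 h6.
by split => //; apply/and4P; split; rewrite ?inD.
Qed.

Lemma hedge_apex (n : nat) : (0 < n)%N -> hedge (Delta n) (apex n).
Proof.
move=> hn; apply/and4P; split; rewrite ?inD /=.
- by apply/set0Pn; exists ord_max; rewrite inE.
- by apply/set0Pn; exists ord_max; rewrite !inE eqxx.
- by rewrite finset.sub1set !inE eqxx.
- by rewrite cards1 cards2 max0.
Qed.

Lemma acyc_main (n : nat) (hn : (0 < n)%N) (W W' : {set {set 'I_n.+1} * {set 'I_n.+1}}) :
  W \subset hedges (Facet n) -> acyclic (Facet n) W ->
  (forall e, e \in W' -> (e == apex n) || (e \in W)) -> W \subset W' ->
  acyclic (Delta n) W'.
Proof.
move=> hWF hacF hW'1 hWW'.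
have inWF : forall e, e \in W -> ord_max \notin e.1 /\ ord_max \notin e.2.
  by move=> e /(fintype.subsetP hWF); rewrite inE => /hedgeF [].
pose P := (fun s : {set 'I_n.+1} => ord_max \in s).
have clos : forall a b, mrel (Delta n) W' a b -> P a -> P b.
  move=> a b; rewrite /mrel /P => /orP [/andP [/and4P [_ _ sab _] _] | hba] va.
    exact: (fintype.subsetP sab).
  case/orP: (hW'1 _ hba) => [/eqP [-> _] | /inWF [_ /= h]]; first by rewrite inE.
  by rewrite va in h.
have restr : forall a b, mrel (Delta n) W' a b -> ~~ P b -> mrel (Facet n) W a b.
  move=> a b; rewrite /mrel /P => /orP [/andP [hab nW] | hba] vb.
    apply/orP; left; apply/andP; split.
      move: hab => /and4P [ha hb sab cab]; apply/and4P; split => //; rewrite inF.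
        rewrite -inD ha /=; apply: contra vb => va; exact: (fintype.subsetP sab _ va).
      by rewrite -inD hb.
    apply: contra nW; exact: (fintype.subsetP hWW').
  apply/orP; right; case/orP: (hW'1 _ hba) => [/eqP [hb _] | //].
  by rewrite hb inE eqxx in vb.
pose phi (s : {set 'I_n.+1}) : nat :=
  if (s == [set ord_max; ord0]) && (apex n \in W') then 1 else 2 * #|s|.
have c2 : #|[set (ord_max : 'I_n.+1); ord0]| = 2 by rewrite cards2 max0.
have phile : forall s, phi s <= 2 * #|s|.
  move=> s; rewrite /phi; case: ifP => // /andP [/eqP -> _]; by rewrite c2.
have ne : [set (ord_max : 'I_n.+1)] != [set ord_max; ord0].
  apply/eqP => /setP /(_ ord0); rewrite !inE eqxx orbT eq_sym (negbTE (max0 hn)).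
  done.
have potlt : forall a b, mrel (Delta n) W' a b -> P a -> phi a < phi b.
  move=> a b; rewrite /mrel /P => /orP [/andP [hab nW] | hba] va.
    move: hab => /and4P [_ _ sab /eqP cab]; simpl in cab, sab.
    have -> : phi b = 2 * #|b|.
      rewrite /phi; case: ifP => // /andP [/eqP eb hap]; exfalso.
      have a1 : #|a| = 1 by move: cab; rewrite eb c2 => -[].
      move/eqP: a1 => /cards1P [x ax].
      move: va; rewrite ax inE => /eqP vx.
      move: nW; rewrite ax -vx.
      by rewrite (_ : ([set ord_max], b) = apex n) ?hap // /apex eb.
    apply: leq_ltn_trans (phile a) _; rewrite cab mulnS; set m := 2 * _; lia.
  case/orP: (hW'1 _ hba) => [/eqP hap | /inWF [_ /= h]]; last by rewrite va in h.
  move: hba; rewrite hap => hba; case: hap => -> ->.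
  by rewrite /phi eqxx hba (negbTE ne) cards1.
apply/negP => /existsP [x /existsP [y /andP [mxy cyx]]].
case: (boolP (P x)) => vx.
  have vy := clos _ _ mxy vx.
  have h2 := connect_pot clos potlt cyx vy.
  have h1 := potlt _ _ mxy vx.
  by have := leq_trans h1 h2; rewrite ltnn.
have vy : ~~ P y by apply: contra vx => vy; exact: (@connect_pres _ _ P clos _ _ cyx vy).
have m' := restr _ _ mxy vy.
have c' := connect_restr clos restr cyx vx.
move/negP: hacF; apply; apply/existsP; exists x; apply/existsP; exists y.
by rewrite m'.
Qed.

Lemma acyc0 (n : nat) : acyclic (Facet n) finset.set0.
Proof.
have lt : forall a b, mrel (Facet n) finset.set0 a b -> (fun _ => true) a -> #|a| < #|b|.
  move=> a b; rewrite /mrel !inE orbF andbT => /and4P [_ _ _ /eqP ->] _; exact: ltnSn.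
apply/negP => /existsP [x /existsP [y /andP [mxy cyx]]].
have h2 := @connect_pot _ _ (fun _ => true) (fun s : {set 'I_n.+1} => #|s|) (fun _ _ _ _ => erefl) lt _ _ cyx erefl.
have h1 := lt _ _ mxy erefl.
by have := leq_trans h1 h2; rewrite ltnn.
Qed.

Lemma match_apex (n : nat) (W : {set {set 'I_n.+1} * {set 'I_n.+1}}) :
  W \subset hedges (Facet n) -> is_matching W -> is_matching (apex n |: W).
Proof.
move=> hWF hm.
have inWF : forall e, e \in W -> ord_max \notin e.1 /\ ord_max \notin e.2.
  by move=> e /(fintype.subsetP hWF); rewrite inE => /hedgeF [].
have key : forall e, e \in W -> [&& (apex n).1 != e.1, (apex n).1 != e.2,
                                  (apex n).2 != e.1 & (apex n).2 != e.2].
  move=> e /inWF [h1 h2]; apply/and4P; split; apply/eqP => E;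
  [move: h1 | move: h2 | move: h1 | move: h2]; by rewrite -E /= !inE eqxx.
apply/forallP => e; apply/implyP; rewrite in_setU1 => he.
apply/forallP => f; apply/implyP; rewrite in_setU1 => hf; apply/implyP => nef.
case/orP: he => [/eqP ee | eW]; case/orP: hf => [/eqP ef | fW].
- by rewrite ee ef eqxx in nef.
- by rewrite ee; apply: key.
- have := key _ eW; rewrite ef => /and4P [h1 h2 h3 h4].
  by apply/and4P; split; rewrite eq_sym.
- by move/forallP: hm => /(_ e) /implyP /(_ eW) /forallP /(_ f) /implyP /(_ fW) /implyP /(_ nef).
Qed.

Lemma hedgesFD (n : nat) : hedges (Facet n) \subset hedges (Delta n).
Proof. by apply/fintype.subsetP => e; rewrite !inE => /hedgeF []. Qed.

Lemma MM_apex (n : nat) (hn : (0 < n)%N) (W : {set {set 'I_n.+1} * {set 'I_n.+1}}) :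
  W \subset hedges (Facet n) -> is_matching W -> acyclic (Facet n) W ->
  apex n |: W \in MM (Delta n).
Proof.
move=> hWF hm ha; rewrite inE; apply/and4P; split.
- by apply/set0Pn; exists (apex n); rewrite setU11.
- rewrite finset.subUset finset.sub1set inE hedge_apex //=; exact: fintype.subset_trans hWF (hedgesFD n).
- exact: match_apex.
- apply: (acyc_main hn hWF ha) => [e|]; first by rewrite in_setU1.
  exact: finset.subsetUr.
Qed.

Lemma MM_sub (n : nat) (hn : (0 < n)%N) : {subset MM (Facet n) <= MM (Delta n)}.
Proof.
move=> W; rewrite !inE => /and4P [h1 h2 h3 h4]; apply/and4P; split => //.
  exact: fintype.subset_trans h2 (hedgesFD n).
by apply: (acyc_main hn h2 h4) => // e ->; rewrite orbT.
Qed.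

Lemma apex_notin (n : nat) (W : {set {set 'I_n.+1} * {set 'I_n.+1}}) :
  W \in finset.set0 |: MM (Facet n) -> apex n \notin W.
Proof.
rewrite in_setU1 => /orP [/eqP -> | ]; first by rewrite inE.
rewrite inE => /and4P [_ h _ _]; apply/negP => /(fintype.subsetP h).
by rewrite inE => /hedgeF [_ /=]; rewrite inE eqxx.
Qed.

Lemma MM_cone (n : nat) (hn : (0 < n)%N) (W : {set {set 'I_n.+1} * {set 'I_n.+1}}) :
  W \in finset.set0 |: MM (Facet n) -> apex n |: W \in MM (Delta n).
Proof.
rewrite in_setU1 => /orP [/eqP -> | ].
  apply: MM_apex => //; [exact: finset.sub0set | | exact: acyc0].
  by apply/forallP => e; rewrite inE.
by rewrite inE => /and4P [_ h1 h2 h3]; apply: MM_apex.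
Qed.
Local Open Scope ring_scope.

Lemma Hcont (R : realType) m (c : 'rV[R]_m) :
  continuous (fun z : R * 'rV[R]_m => z.2 + z.1 *: (c - z.2)).
Proof.
move=> z.
apply: (@continuousD _ _ _ snd (fun z : R * 'rV[R]_m => z.1 *: (c - z.2))).
  exact: cvg_snd.
apply: continuousZ; first exact: cvg_fst.
apply: (@continuousD _ _ _ (fun=> c) (fun z : R * 'rV[R]_m => - z.2)).
  exact: cst_continuous.
apply: continuousN; exact: cvg_snd.
Qed.

Lemma null_gen (R : realType) (U : finType) (X A : {set {set U}}) (ap : U) :
  {subset A <= X} ->
  (forall s, s \in finset.set0 |: A -> ap |: s \in X) ->
  (forall s, s \in finset.set0 |: A -> ap \notin s) ->
  incl_nullhomotopic R A X.
Proof.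
move=> hAX hc hv.
pose r := enum_rank ap.
pose c : 'rV[R]_#|U| := \row_j (j == r)%:R.
have sc : \sum_i c ord0 i = 1.
  rewrite (bigD1 r) //= big1 => [|j jr]; first by rewrite mxE eqxx addr0.
  by rewrite mxE (negbTE jr).
exists (fun z : R * 'rV[R]_#|U| => z.2 + z.1 *: (c - z.2)), c; split.
- apply: continuous_subspaceT; exact: Hcont.
- move=> t x /=; rewrite in_itv /= => /andP [t0 t1] [x0 sx xA].
  have E : forall i, (x + t *: (c - x)) ord0 i = (1 - t) * x ord0 i + t * c ord0 i.
    by move=> i; rewrite !mxE; ring.
  split.
  + move=> i; rewrite E; apply: addr_ge0; apply: mulr_ge0 => //; rewrite ?subr_ge0 //.
    by rewrite mxE; case: (i == r).
  + rewrite (eq_bigr _ (fun i _ => E i)) big_split /= -!mulr_sumr sx sc.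
    by rewrite mulr1; ring.
  + have xap : x ord0 r = 0.
      apply/eqP; apply: contraNT (hv _ (setU1r _ xA)) => h; by rewrite inE.
    case: (eqVneq t 0) => [-> | tn0].
      rewrite scale0r addr0; apply: hAX xA.
    set S' := if t == 1 then finset.set0 else [set u | x ord0 (enum_rank u) != 0].
    have S'in : S' \in finset.set0 |: A.
      by rewrite /S'; case: ifP => _; rewrite ?setU11 // setU1r.
    suff -> : [set u | (x + t *: (c - x)) ord0 (enum_rank u) != 0] = ap |: S'.
      exact: hc.
    apply/setP => u; rewrite in_setU1 inE E mxE.
    case: (eqVneq u ap) => [-> | uap] /=.
      by rewrite -/r xap eqxx mulr0 add0r mulr1 tn0.
    have -> : (enum_rank u == r) = false by rewrite (inj_eq enum_rank_inj) (negbTE uap).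
    rewrite mulr0 addr0 /S'; case: (eqVneq t 1) => [->|t1'].
      by rewrite subrr mul0r eqxx inE.
    by rewrite inE mulf_eq0 negb_or subr_eq0 eq_sym (negbTE t1').
- by move=> x _; rewrite scale0r addr0.
- by move=> x _; rewrite scale1r addrC subrK.
Qed.

Theorem mainTheorem8 (n : nat) (hn : (2 <= n)%N) :
  (forall R : realType, incl_nullhomotopic R (MM (Facet n)) (MM (Delta n))) /\
  (forall k : int, les_splits_at (MM (Delta n)) (MM (Facet n)) k) /\
  (forall k : int,
     sq_iso (G1 := {ffun {set ({set 'I_n.+1} * {set 'I_n.+1})} -> int})
            (G2 := ({ffun {set ({set 'I_n.+1} * {set 'I_n.+1})} -> int} *
                    {ffun {set ({set 'I_n.+1} * {set 'I_n.+1})} -> int})%type)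
            (relcyc (MM (Delta n)) (MM (Facet n)) k)
            (relbnd (MM (Delta n)) (MM (Facet n)) k)
            (fun p => cycles (MM (Delta n)) k p.1 /\ cycles (MM (Facet n)) (k - 1) p.2)
            (fun p => bnd (MM (Delta n)) k p.1 /\ bnd (MM (Facet n)) (k - 1) p.2)).
Proof.
have hn' : (0 < n)%N by apply: leq_trans hn.
split; [|split].
- move=> R; exact: (@null_gen R _ _ _ (apex n) (MM_sub hn') (MM_cone hn') (@apex_notin n)).
- move=> k; exact: (les_gen k (MM_sub hn') (MM_cone hn') (@apex_notin n)).
- move=> k; exact: (sq_gen k (MM_sub hn') (MM_cone hn') (@apex_notin n)).
Qed.
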